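(* Let $G$ be a network and let $\mathfrak{F}$ be a sample of the free uniform spanning forest measure $\mathsf{FUSF}_G$ of $G$. Let $v$ be a vertex of $G$ and let $E$ be an element of the set $\{e: e^-=v \}$ of oriented edges emanating from $v$, chosen independently of $\mathfrak{F}$ and with probability proportional to its conductance. Then $U(\mathfrak{F},E)$ and $\mathfrak{F}$ have the same distribution.
   Context: A network is a locally finite connected multigraph $G=(V,E)$ with positive edge conductances $c(e)$; oriented edges $e$ go from the tail $e^-$ to the head $e^+$. The free uniform spanning forest $\mathsf{FUSF}_G$ of an infinite network is the weak limit of the uniform spanning tree measures $\mathsf{UST}_{G_n}$ on the finite subnetworks $G_n$ induced by an exhaustion $\langle V_n\rangle$ of $G$ (the UST of a finite network gives each spanning tree probability proportional to the product of its edge conductances). For a finite network, a spanning tree $t$ and an oriented edge $e$ that is not a self-loop, the direction $D(t,e)$ is the first edge of the unique simple path from $e^-$ to $e^+$ in $t$. For an infinite network with exhaustion $\langle V_n\rangle$ and $T_n$ a sample of $\mathsf{UST}_{G_n}$, the pairs $(T_n,D(T_n,e))$ converge in distribution to a limit $(\mathfrak{F},D(e))$, where $D(e)$ is an edge adjacent to $e^-$ and $\mathfrak{F}$ has law $\mathsf{FUSF}_G$. For an oriented edge $e$ and $\mathsf{FUSF}_G$-a.e. spanning forest $f$, the update $U(f,e)$ is defined as follows: if $e$ is a self-loop or already belongs to $f$, set $U(f,e)=f$; otherwise sample $D(e)$ from its conditional distribution given $\mathfrak{F}=f$ (using randomness independent of everything else) and set $U(f,e)=f\cup\{e\}\setminus\{D(e)\}$.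 *)

(* Defs.v *)
From HB Require Import structures.
From mathcomp Require Import all_boot all_order all_algebra.
From mathcomp Require Import finmap.
From mathcomp Require Import all_classical all_reals all_analysis.

Set Implicit Arguments.
Unset Strict Implicit.
Unset Printing Implicit Defensive.

Import Order.TTheory GRing.Theory Num.Theory.
Local Open Scope classical_set_scope.
Local Open Scope ring_scope.

(* An oriented edge is a pair (u, b) : U * bool; the
   orientation b = true goes from (ends u).1 to (ends u).2, b = false
   goes the other way. *)
Section Network.
Variables (V : choiceType) (U : countType) (ends : U -> V * V).

Definition oedge := (U * bool)%type.

Definition tail (e : oedge) : V := if e.2 then (ends e.1).1 else (ends e.1).2.
Definition head (e : oedge) : V := if e.2 then (ends e.1).2 else (ends e.1).1.
Definition selfloop (e : oedge) : bool := tail e == head e.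

Fixpoint walk (F : set U) (x : V) (p : seq oedge) (y : V) : Prop :=
  match p with
  | [::] => x = y
  | e :: p' => [/\ F e.1, tail e = x & walk F (head e) p' y]
  end.

Definition simple_path (F : set U) (x : V) (p : seq oedge) (y : V) : Prop :=
  walk F x p y /\ uniq (x :: map head p).

Definition cycle_in (F : set U) (x : V) (p : seq oedge) : Prop :=
  [/\ p <> [::], walk F x p x, uniq (map head p) & uniq (map fst p)].

Definition acyclic (F : set U) : Prop := forall x p, ~ cycle_in F x p.

Definition connected_on (F : set U) (W : set V) : Prop :=
  forall x y, W x -> W y -> exists p, walk F x p y.

Definition induced_edges (W : set V) : set U :=
  [set u | W (ends u).1 /\ W (ends u).2].

Definition spanning_tree (W : {fset V}) (t : {fset U}) : Prop :=
  [/\ [set` t] `<=` induced_edges [set` W],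
      connected_on [set` t] [set` W] & acyclic [set` t]].

Definition conf (t : {fset U}) : U -> bool := fun u => u \in t.

Definition direction_is (t : {fset U}) (e d : oedge) : Prop :=
  exists p, simple_path [set` t] (tail e) (d :: p) (head e).

Definition upd (f : U -> bool) (e d : oedge) : U -> bool :=
  fun u => if u == d.1 then false else if u == e.1 then true else f u.

Definition cylinders : set (set (U -> bool)) :=
  [set A | exists (S : {fset U}) (s : U -> bool),
      A = [set w | forall u, u \in S -> w u = s u]].

Definition Omega := g_sigma_algebraType cylinders.

Variables (R : realType) (c : U -> R).

Definition network : Prop :=
  [/\ (forall u, 0 < c u),
      (forall x, finite_set [set u | (ends u).1 = x \/ (ends u).2 = x]) &
      (forall x y, exists p, walk setT x p y)].

Definition exhaustion (W : nat -> {fset V}) : Prop :=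
  [/\ (forall n, (W n `<=` W n.+1)%fset),
      (forall x, exists n, x \in W n) &
      (forall n, connected_on (induced_edges [set` W n]) [set` W n])].

Definition tree_weight (t : {fset U}) : R := \prod_(u <- t) c u.

Definition ust (W : {fset V}) (B : set (U -> bool)) : R :=
  (\sum_(t \in [set t | spanning_tree W t /\ B (conf t)]) tree_weight t) /
  (\sum_(t \in [set t | spanning_tree W t]) tree_weight t).

Definition ust_dir (W : {fset V}) (e d : oedge) (B : set (U -> bool)) : R :=
  (\sum_(t \in [set t | [/\ spanning_tree W t, B (conf t) & direction_is t e d]])
      tree_weight t) /
  (\sum_(t \in [set t | spanning_tree W t]) tree_weight t).

Definition out_cond (x : V) : R :=
  \sum_(e \in [set e : oedge | tail e = x]) c e.1.

End Network.

(* Main.v *)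
Require Import Defs.
From HB Require Import structures.
From mathcomp Require Import all_boot all_order all_algebra.
From mathcomp Require Import finmap.
From mathcomp Require Import all_classical all_reals all_analysis.

Import Order.TTheory GRing.Theory Num.Theory.
Import numFieldNormedType.Exports.
Local Open Scope classical_set_scope.
Local Open Scope ring_scope.
Set Implicit Arguments.
Unset Strict Implicit.
Unset Printing Implicit Defensive.
From mathcomp Require Import ring.
From mathcomp Require Import lra.
Section Graph.
Variables (V : choiceType) (U : countType) (ends : U -> V * V).
Local Notation oedge := (Defs.oedge U).
Local Notation tail := (Defs.tail ends).
Local Notation head := (Defs.head ends).
Local Notation walk := (Defs.walk ends).
Local Notation simple_path := (Defs.simple_path ends).

Definition flip (e : oedge) : oedge := (e.1, ~~ e.2).
Definition revw (p : seq oedge) := rev (map flip p).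

Lemma tail_flip e : tail (flip e) = head e.
Proof. by rewrite /tail /head /flip /=; case: e.2. Qed.
Lemma head_flip e : head (flip e) = tail e.
Proof. by rewrite /tail /head /flip /=; case: e.2. Qed.

Lemma same_fst (e f : oedge) : f.1 = e.1 -> f = e \/ f = flip e.
Proof.
case: e f => [u b] [u' b'] /= ->; rewrite /flip /=.
by case: b; case: b'; auto.
Qed.

Lemma walk_cat F x p y q z : walk F x p y -> walk F y q z -> walk F x (p ++ q) z.
Proof.
elim: p x => [|e p IH] x /=; first by move=> -> .
by case=> Fe te wp wq; split => //; apply: IH wq.
Qed.

Lemma walk_last F x p y : walk F x p y -> y = last x (map head p).
Proof. by elim: p x => [|e p IH] x /=; [move=> ->|case=> _ _ /IH]. Qed.

Lemma walk_catP F x p q z : walk F x (p ++ q) z ->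
  walk F x p (last x (map head p)) /\ walk F (last x (map head p)) q z.
Proof.
elim: p x => [|e p IH] x /=; first by [].
by case=> Fe te /IH [w1 w2]; split.
Qed.

Lemma walk_rcons F x p e y : walk F x (rcons p e) y <->
  [/\ walk F x p (tail e), F e.1 & head e = y].
Proof.
elim: p x => [|f p IH] x /=.
  split; first by case=> ? ? ->.
  by case=> -> ? <-.
split; first by case=> ? ? /IH [? ? ?].
by case=> [[? ? ?] ? ?]; split => //; apply/IH.
Qed.

Lemma walk_rev F x p y : walk F x p y -> walk F y (revw p) x.
Proof.
elim: p x => [|e p IH] x /=; first by move=> ->.
case=> Fe te /IH wp.
have -> : revw (e :: p) = rcons (revw p) (flip e) by rewrite /revw map_cons rev_cons.
by apply/walk_rcons; split => //; rewrite ?tail_flip ?head_flip.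
Qed.

Lemma map_fst_revw p : map fst (revw p) = rev (map fst p).
Proof. by rewrite /revw map_rev -map_comp. Qed.

Lemma walk_edges F x p y e : walk F x p y -> e \in p -> F e.1.
Proof.
elim: p x => [|f p IH] x //=; case=> Ff _ wp.
by rewrite inE => /orP[/eqP->//|]; apply: IH wp.
Qed.

Lemma walk_sub F G x p y : walk F x p y -> (forall e, e \in p -> G e.1) ->
  walk G x p y.
Proof.
elim: p x => [|f p IH] x //=; case=> Ff tf wp H; split => //.
  by apply: H; rewrite inE eqxx.
by apply: IH => // e ep; apply: H; rewrite inE ep orbT.
Qed.

Lemma walk_subF (F G : set U) x p y : F `<=` G -> walk F x p y -> walk G x p y.
Proof. by move=> FG w; apply: (walk_sub w) => e /(walk_edges w) /FG. Qed.

Lemma heads_revw F x p y : walk F x p y ->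
  y :: map head (revw p) = rev (x :: map head p).
Proof.
elim: p x => [|e p IH] x /=; first by move=> ->.
case=> _ te /IH H.
have -> : revw (e :: p) = rcons (revw p) (flip e) by rewrite /revw map_cons rev_cons.
rewrite map_rcons -rcons_cons H head_flip te.
by rewrite [in RHS]rev_cons.
Qed.

Lemma walk_tail_mem F x p y f : walk F x p y -> f \in p ->
  tail f \in x :: map head p.
Proof.
elim: p x => [|e p IH] x //=; case=> _ te wp.
rewrite inE => /orP[/eqP->|fp]; first by rewrite te inE eqxx.
by have := IH _ wp fp; rewrite !inE => ->; rewrite !orbT.
Qed.

Lemma walk_end_mem F x p y : walk F x p y -> p <> [::] -> y \in map head p.
Proof.
move=> /walk_last ->; case: p => [//|e p _] /=.
by rewrite mem_last.
Qed.

Lemma simple_uniq_fst F x p y : simple_path F x p y -> uniq (map fst p).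
Proof.
elim: p x => [|e p IH] x //= [[Fe te wp]] /= /andP[xn /andP[hn up]].
rewrite (IH (head e)) ?andbT; last by split => //=; rewrite hn.
apply/mapP => -[f fp fe].
have [fe'|fe'] := same_fst (esym fe).
  by move: hn; rewrite -fe'; move/negP; apply; apply: map_f.
move: xn; rewrite -te inE negb_or => /andP[_ /negP]; apply.
by rewrite -head_flip -fe'; apply: map_f.
Qed.

Lemma simple_cut F a q y x : simple_path F a q y -> x \in a :: map head q ->
  exists q', simple_path F x q' y /\ {subset map fst q' <= map fst q}.
Proof.
elim: q a => [|f q IH] a.
  by rewrite inE => sp /eqP ->; exists [::].
move=> sp; rewrite inE => /orP[/eqP ->|xin]; first by exists (f :: q); split.
case: sp => -[Ff tf wq] /= /andP[_ uq].
have [q' [sq' sub]] := IH (head f) (conj wq uq) xin.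
by exists q'; split => // u /sub; rewrite inE => ->; rewrite orbT.
Qed.

Lemma shorten F x p y : walk F x p y ->
  exists q, simple_path F x q y /\ {subset map fst q <= map fst p}.
Proof.
elim: p x => [|e p IH] x /=; first by move=> ->; exists [::].
case=> Fe te /IH [q [sq sub]].
have [xin|xnin] := boolP (x \in head e :: map head q).
  have [q' [sq' sub']] := simple_cut sq xin.
  by exists q'; split => // u /sub' /sub; rewrite inE => ->; rewrite orbT.
exists (e :: q); split.
  by case: sq => wq uq; split => //=; rewrite xnin.
by move=> u; rewrite /= !inE => /orP[->//|/sub ->]; rewrite orbT.
Qed.

Lemma simple_rev F x p y : simple_path F x p y -> simple_path F y (revw p) x.
Proof.
case=> w u; split; first exact: walk_rev.
by rewrite (heads_revw w) rev_uniq.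
Qed.

Lemma simple_path_unique F x p q y : acyclic ends F ->
  simple_path F x p y -> simple_path F x q y -> p = q.
Proof.
move=> ac; elim: p x q => [|a p IH] x q.
  case=> /= -> _; case: q => [//|b q] [wq uq].
  have yin : y \in map head (b :: q) by apply: (walk_end_mem wq).
  by move: uq => /andP[]; rewrite yin.
case: q => [|b q].
  case=> [wp up] [/= xy _]; subst y; exfalso.
  have yin : x \in map head (a :: p) by apply: (walk_end_mem wp).
  by move: up => /andP[]; rewrite yin.
move=> [[Fa ta wp] up] [[Fb tb wq] uq].
have [ab|ab] := eqVneq a b.
  subst b; congr (_ :: _); apply: (IH (head a)).
    by split => //; move: up => /= /andP[].
  by split => //; move: uq => /= /andP[].
exfalso.
have nq : a.1 \notin map fst (b :: q).
  apply/mapP => -[f fbq fa]; have [fe|fe] := same_fst (esym fa); subst f.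
    move: fbq; rewrite inE => /orP[/eqP abe|aq]; first by rewrite abe eqxx in ab.
    have := walk_tail_mem wq aq; rewrite ta => xin.
    by move: uq => /= /andP[]; rewrite xin.
  have := map_f head fbq; rewrite head_flip ta => xin.
  by move: uq => /andP[]; rewrite xin.
have np : a.1 \notin map fst p.
  have spa : simple_path F x (a :: p) y by split.
  by have := simple_uniq_fst spa => /= /andP[].
have wbq : walk F x (b :: q) y by split.
have w := walk_cat wp (walk_rev wbq).
have [s [ss sub]] := shorten w.
have ns : a.1 \notin map fst s.
  apply/negP => /sub; rewrite map_cat mem_cat map_fst_revw mem_rev.
  by apply/negP; rewrite negb_or np.
apply: (ac x (a :: s)); split => //=.
- by split => //; case: ss.
- by case: ss.
- by rewrite ns (simple_uniq_fst ss).
Qed.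

Lemma cycle_split F x q1 f q2 : cycle_in ends F x (q1 ++ f :: q2) ->
  simple_path (fun u => F u /\ u <> f.1) (head f) (q2 ++ q1) (tail f)
  /\ {subset map fst (q2 ++ q1) <= map fst (q1 ++ f :: q2)}.
Proof.
case=> _ w uh uf.
have [w1 w2] := walk_catP w.
move: w2 => /= [Ff tf w2].
have sub : {subset map fst (q2 ++ q1) <= map fst (q1 ++ f :: q2)}.
  by move=> u; rewrite !map_cat !mem_cat /= inE => /orP[->|->]; rewrite ?orbT.
split => //; split.
  rewrite tf; apply: (walk_sub (walk_cat w2 w1)) => e ein; split.
    apply: (walk_edges w); move: ein; rewrite !mem_cat inE => /orP[->|->];
      by rewrite ?orbT.
  move=> ef; move: uf; rewrite map_cat cat_uniq /= => /and3P[_ + /andP[nq2 _]].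
  rewrite negb_or => /andP[nq1 _].
  move: ein; rewrite mem_cat => /orP[] ein.
    by move: nq2 => /mapP; apply; exists e.
  by move: nq1 => /negP; apply; apply/mapP; exists e.
have -> : head f :: map head (q2 ++ q1) = map head (f :: q2) ++ map head q1.
  by rewrite /= map_cat.
by rewrite uniq_catC -map_cat.
Qed.

End Graph.
Section Tree.
Variables (V : choiceType) (U : countType) (ends : U -> V * V).
Local Notation oedge := (Defs.oedge U).
Local Notation tail := (Defs.tail ends).
Local Notation head := (Defs.head ends).
Local Notation walk := (Defs.walk ends).
Local Notation simple_path := (Defs.simple_path ends).

Lemma simple_subF (F G : set U) x p y : F `<=` G -> simple_path F x p y ->
  simple_path G x p y.
Proof. by move=> FG [w u]; split => //; apply: walk_subF w. Qed.

Lemma ends_in (W : {fset V}) (d : oedge) :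
  tail d \in W -> head d \in W -> (ends d.1).1 \in W /\ (ends d.1).2 \in W.
Proof. by rewrite /Defs.tail /Defs.head; case: d.2. Qed.

Lemma dir_exists (W : {fset V}) t x y : spanning_tree ends W t ->
  x \in W -> y \in W -> x != y ->
  exists e p, simple_path [set` t] x (e :: p) y.
Proof.
case=> _ co _ xW yW xy.
have [q wq] := co x y xW yW.
have [[|e p] [sp _]] := shorten wq.
  by case: sp => /= exy; rewrite exy eqxx in xy.
by exists e, p.
Qed.

Lemma walk_conv (F G : set U) (e : oedge) r x q y :
  walk G (tail e) r (head e) ->
  (forall u, F u -> u <> e.1 -> G u) ->
  walk F x q y -> exists q', walk G x q' y.
Proof.
move=> R FG; elim: q x => [|g q IH] x /=; first by move=> ->; exists [::].
case=> Fg tg /IH [q' wq'].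
have [ge|nge] := eqVneq g.1 e.1.
  have [ge'|ge'] := same_fst ge; subst g.
    by exists (r ++ q'); rewrite -tg; apply: (walk_cat R).
  exists (revw r ++ q'); rewrite -tg tail_flip; apply: (walk_cat (walk_rev R)).
  by rewrite -head_flip.
by exists (g :: q'); split => //; apply: FG => //; apply/eqP.
Qed.

Lemma exchange (W : {fset V}) t' (d e : oedge) p :
  spanning_tree ends W t' -> tail d \in W -> head d \in W -> d.1 \notin t' ->
  simple_path [set` t'] (tail d) (e :: p) (head d) ->
  spanning_tree ends W ((d.1 |` t') `\ e.1)%fset /\
  direction_is ends ((d.1 |` t') `\ e.1)%fset e d.
Proof.
move=> st tdW hdW dt sp.
have [sub' co' ac'] := st.
set T := ((d.1 |` t') `\ e.1)%fset.
have inT u : (u \in T) = (u != e.1) && ((u == d.1) || (u \in t')).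
  by rewrite /T !inE.
case: (sp) => -[et te wp] up.
have et' : e.1 \in t' by [].
have nep : e.1 \notin map fst p.
  by have := simple_uniq_fst sp => /= /andP[].
have de : d.1 != e.1 by apply/eqP => de; rewrite de et' in dt.
have dT : d.1 \in T by rewrite inT de eqxx.
have wpT : walk [set` T] (head e) p (head d).
  apply: (walk_sub wp) => f fp; rewrite /= inT.
  have -> : f.1 \in t' by have := walk_edges wp fp.
  rewrite orbT andbT; apply/eqP => fe; move: nep; rewrite -fe.
  by rewrite (map_f fst fp).
have R : walk [set` T] (tail e) (d :: revw p) (head e).
  by split; [exact: dT | rewrite te | exact: walk_rev wpT].
have uR : uniq (tail e :: map head (d :: revw p)).
  rewrite [map _ _]/= (heads_revw wp) te.
  by rewrite cons_uniq mem_rev rev_uniq -cons_uniq.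
split; last by exists (revw p).
split.
- move=> u /=; rewrite inT => /andP[_ /orP[/eqP ->|ut']].
    by have [? ?] := ends_in tdW hdW; split.
  exact: sub'.
- move=> x y xW yW; have [q wq] := co' x y xW yW.
  apply: (walk_conv R _ wq) => u /= ut ue.
  by rewrite inT ut orbT andbT; apply/eqP.
- move=> x q cq.
  have [dq|ndq] := boolP (d.1 \in map fst q).
    have [f fq df] := mapP dq.
    move: cq; case/splitPr: fq => q1 q2 cq.
    have [[ws us] _] := cycle_split cq.
    pose F'' := fun u => u \in t' /\ u <> e.1.
    have ws' : walk F'' (head f) (q2 ++ q1) (tail f).
      apply: walk_subF ws => u /= [+ ufd]; rewrite inT => /andP[/eqP ue].
      by case/orP => [/eqP udf|//]; exfalso; apply: ufd; rewrite udf df.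
    have [s' ss'] : exists s', simple_path F'' (tail d) s' (head d).
      have [fd|fd] := same_fst (esym df); subst f.
        by exists (revw (q2 ++ q1)); apply: simple_rev.
      by exists (q2 ++ q1); rewrite -head_flip -[X in simple_path _ _ _ X]tail_flip.
    have st' : simple_path [set` t'] (tail d) s' (head d).
      by apply: simple_subF ss' => u [].
    have eq := simple_path_unique ac' sp st'.
    case: ss' => ws'' _; rewrite -eq in ws''.
    by case: ws'' => -[_ /(_ erefl)].
  apply: (ac' x q); case: cq => q0 wq uq uq'; split => //.
  apply: (walk_sub wq) => f fq; have := walk_edges wq fq; rewrite /= inT.
  case/andP => _ /orP[/eqP fd|//]; exfalso; move: ndq.
  by rewrite -fd (map_f fst fq).
Qed.

End Tree.
Section SumLemmas.
Variable R : realType.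

Lemma fsum_le_sub (I : choiceType) (A B : set I) (f : I -> R) :
  finite_set B -> A `<=` B -> (forall x, B x -> 0 <= f x) ->
  \sum_(x \in A) f x <= \sum_(x \in B) f x.
Proof.
move=> Bf AB f0; rewrite (fsbigID A B) //.
have -> : B `&` A = A by apply/seteqP; split => [x []//|x Ax]; split => //; apply: AB.
rewrite lerDl; apply: fsumr_ge0 => x [Bx _]; exact: f0.
Qed.

Lemma fsum_pair (I J : choiceType) (P : set I) (Q : I -> set J) (g : I -> J -> R)
    (Tall : set J) :
  finite_set P -> finite_set Tall -> (forall i, Q i `<=` Tall) ->
  \sum_(i \in P) \sum_(j \in Q i) g i j =
  \sum_(y \in [set y | P y.1 /\ Q y.1 y.2]) g y.1 y.2.
Proof.
move=> Pf Tf QT.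
pose h i j := if `[< Q i j >] then g i j else 0.
transitivity (\sum_(i \in P) \sum_(j \in Tall) h i j).
  apply: eq_fsbigr => i _.
  rewrite (eq_fsbigr (h i)); last by move=> j; rewrite inE /h => Qj; rewrite asboolT.
  apply: fsbig_widen => // j [_ nQ]; rewrite /preimage /= /h; by case: asboolP.
rewrite pair_fsbig //.
rewrite [RHS](eq_fsbigr (fun y => h y.1 y.2)); last first.
  by move=> y; rewrite inE /h => -[_ ?]; rewrite asboolT.
apply/esym/fsbig_widen.
- by move=> y [Py Qy]; exact: (conj Py (QT _ _ Qy)).
- move=> y [[Py _] /not_andP[//|nQ]]; rewrite /preimage /= /h; by case: asboolP.
Qed.

End SumLemmas.
Section Count.
Variables (R : realType) (V : choiceType) (U : countType) (ends : U -> V * V)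
  (c : U -> R).
Hypothesis cpos : forall u, 0 < c u.
Hypothesis locfin : forall x, finite_set [set u | (ends u).1 = x \/ (ends u).2 = x].
Local Notation oedge := (Defs.oedge U).
Local Notation tail := (Defs.tail ends).
Local Notation head := (Defs.head ends).
Local Notation walk := (Defs.walk ends).
Local Notation simple_path := (Defs.simple_path ends).
Local Notation ST := (spanning_tree ends).

Definition Tall (W : {fset V}) := [set t : {fset U} | [set` t] `<=` induced_edges ends [set` W]].

Lemma finite_IE (W : {fset V}) : finite_set (induced_edges ends [set` W]).
Proof.
apply: (sub_finite_set _ (bigcup_finite (D := [set` W])
   (F := fun x => [set u | (ends u).1 = x \/ (ends u).2 = x]) (finite_fset W)
   (fun x _ => locfin x))).
by move=> u [W1 W2]; exists (ends u).1 => //=; left.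
Qed.

Lemma finite_Tall (W : {fset V}) : finite_set (Tall W).
Proof.
set IE := fset_set (induced_edges ends [set` W]).
apply: (sub_finite_set _ (finite_fset (fpowerset IE))).
move=> t Tt /=; rewrite fpowersetE; apply/fsubsetP => u ut.
rewrite in_fset_set; last exact: finite_IE.
by rewrite inE; apply: Tt.
Qed.

Lemma trees_Tall (W : {fset V}) (P : {fset U} -> Prop) :
  [set t | ST W t /\ P t] `<=` Tall W.
Proof. by move=> t [[]]. Qed.

Lemma finite_trees (W : {fset V}) (P : {fset U} -> Prop) : finite_set [set t | ST W t /\ P t].
Proof. exact: sub_finite_set (@trees_Tall W P) (finite_Tall W). Qed.

Lemma wt_ge0 t : 0 <= tree_weight c t.
Proof. by apply: prodr_ge0 => u _; apply/ltW. Qed.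

Lemma wt_exchange (t : {fset U}) a b : a \notin t -> b \in t -> a != b ->
  c b * tree_weight c ((a |` t) `\ b)%fset = c a * tree_weight c t.
Proof.
move=> nat bt ab; rewrite /tree_weight -big_fsetD1 ?big_fsetU1 //.
by rewrite !inE bt orbT.
Qed.

Lemma finite_Ov v : finite_set [set e : oedge | tail e = v].
Proof.
apply: (sub_finite_set _ (finite_setX (locfin v) (@finite_finset bool setT))).
move=> [u b]; rewrite /Defs.tail /=; case: b => <-; split => //=; by [left|right].
Qed.

Definition Kset (d : oedge) : set (U -> bool) := [set w | selfloop ends d || w d.1].
Definition Aset (A : set (U -> bool)) (e d : oedge) : set (U -> bool) :=
  [set w | ~~ selfloop ends e /\ ~~ w e.1 /\ A (upd w e d)].
Definition Num (W : {fset V}) (B : set (U -> bool)) :=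
  \sum_(t \in [set t | ST W t /\ B (conf t)]) tree_weight c t.
Definition NumD (W : {fset V}) e d (B : set (U -> bool)) :=
  \sum_(t \in [set t | [/\ ST W t, B (conf t) & direction_is ends t e d]])
      tree_weight c t.

Definition dpath (t : {fset U}) (d e : oedge) :=
  exists p, simple_path [set` t] (tail d) (e :: p) (head d).
Definition e_of (t : {fset U}) (d : oedge) : oedge :=
  match pselect (exists e, dpath t d e) with
  | left H => sval (cid H)
  | right _ => d end.
Lemma e_ofP t d : (exists e, dpath t d e) -> dpath t d (e_of t d).
Proof. by rewrite /e_of; case: pselect => // H _; exact: (svalP (cid H)). Qed.

Lemma recover (t : {fset U}) a b : a \notin t -> b \in t -> a != b ->
  ((b |` ((a |` t) `\ b)) `\ a)%fset = t.
Proof.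
move=> nat bt ab; apply/fsetP => u; rewrite !inE.
have [->|ua] := eqVneq u a; first by rewrite (negbTE nat).
have [->|ub] := eqVneq u b; first by rewrite bt.
by [].
Qed.

Lemma NumD_ge0 W e d B : 0 <= NumD W e d B.
Proof. by apply: fsumr_ge0 => t _; apply: wt_ge0. Qed.

Lemma key (W : {fset V}) v (A : set (U -> bool)) d :
  v \in W -> (forall e, tail e = v -> head e \in W) -> tail d = v ->
  c d.1 * Num W (A `&` ~` Kset d) <=
  \sum_(e \in [set e | tail e = v]) c e.1 * NumD W e d (Aset A e d).
Proof.
move=> vW hW td.
have RHS0 : 0 <= \sum_(e \in [set e | tail e = v]) c e.1 * NumD W e d (Aset A e d).
  by apply: fsumr_ge0 => e _; apply: mulr_ge0; [apply/ltW|apply: NumD_ge0].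
rewrite /Num mulr_fsumr.
set X := [set t | ST W t /\ (A `&` ~` Kset d) (conf t)].
have [sd|nsd] := boolP (selfloop ends d).
  rewrite fsbig1 //= => t [_ [_]]; by rewrite /Kset /= sd => /(_ isT).
have Xfacts t : X t -> exists p,
   [/\ simple_path [set` t] (tail d) (e_of t d :: p) (head d),
       ST W t, A (conf t) & d.1 \notin t].
  move=> [stt [At /negP]]; rewrite /conf /= negb_or => /andP[_ dt].
  have := @e_ofP t d; case.
    apply: dir_exists stt _ _ _; rewrite ?td //; first by apply: hW.
    by move: nsd; rewrite /selfloop td.
  by move=> p sp; exists p.
pose h t := (e_of t d, ((d.1 |` t) `\ (e_of t d).1)%fset).
pose G (y : oedge * {fset U}) := c y.1.1 * tree_weight c y.2.
have common t : X t ->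
   [/\ (e_of t d).1 \in t, tail (e_of t d) = v, head (e_of t d) != v,
        d.1 \notin t & d.1 != (e_of t d).1].
  move=> /Xfacts [p [sp _ _ dt]].
  case: (sp) => -[et te _] /= /andP[hn _].
  have et' : (e_of t d).1 \in t by [].
  split => //; first by rewrite te td.
  - by apply/eqP => hv; move: hn; rewrite td -hv inE eqxx.
  - by apply/eqP => de; rewrite de et' in dt.
rewrite (eq_fsbigr (fun t => G (h t))); last first.
  move=> t; rewrite inE => Xt; have [et _ _ dt de] := common t Xt.
  by rewrite /G /h /= wt_exchange.
rewrite -fsbig_image; last first.
  move=> t1 t2; rewrite !inE => X1 X2 [e12 T12].
  have [e1t _ _ d1t de1] := common t1 X1.
  have [e2t _ _ d2t de2] := common t2 X2.
  rewrite -(recover d1t e1t de1) -(recover d2t e2t de2).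
  by rewrite T12 e12.
set Y := [set y : oedge * {fset U} | [set e | tail e = v] y.1 /\
  [set t | [/\ ST W t, Aset A y.1 d (conf t) & direction_is ends t y.1 d]] y.2].
apply: (@le_trans _ _ (\sum_(y \in Y) G y)).
  apply: fsum_le_sub.
  - apply: (sub_finite_set _ (finite_setX (finite_Ov v) (finite_Tall W))).
    by move=> y [? [[]]]; split.
  - move=> _ [t Xt <-]; have [p [sp stt At dt]] := Xfacts t Xt.
    have [et te hne _ de] := common t Xt.
    have tdW : tail d \in W by rewrite td.
    have [stT dirT] := exchange stt tdW (hW _ td) dt sp.
    split => //; split => //; split => /=.
      by rewrite /selfloop te eq_sym.
    split; first by rewrite /conf !inE eqxx.
    suff -> : upd (conf ((d.1 |` t) `\ (e_of t d).1)%fset) (e_of t d) d = conf t by [].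
    apply/funext => u; rewrite /upd /conf.
    have [->|ud] := eqVneq u d.1; first by rewrite (negbTE dt).
    have [->|ue] := eqVneq u (e_of t d).1; first by rewrite et.
    by rewrite !inE ue (negbTE ud).
  - by move=> y _; rewrite /G; apply: mulr_ge0; [apply/ltW|apply: wt_ge0].
rewrite le_eqVlt; apply/orP; left; apply/eqP.
rewrite /Y /G /NumD; under [RHS]eq_fsbigr do rewrite mulr_fsumr.
rewrite (@fsum_pair _ _ _ _ (fun e => [set t | [/\ ST W t, Aset A e d (conf t)
   & direction_is ends t e d]]) (fun e t => c e.1 * tree_weight c t) (Tall W)).
- by [].
- exact: finite_Ov.
- exact: finite_Tall.
- by move=> e t [[]].
Qed.

End Count.
Section Count2.
Variables (R : realType) (V : choiceType) (U : countType) (ends : U -> V * V)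
  (c : U -> R).
Hypothesis cpos : forall u, 0 < c u.
Hypothesis locfin : forall x, finite_set [set u | (ends u).1 = x \/ (ends u).2 = x].
Local Notation oedge := (Defs.oedge U).
Local Notation tail := (Defs.tail ends).
Local Notation head := (Defs.head ends).
Local Notation ST := (spanning_tree ends).

Lemma fsum_le (I : choiceType) (P : set I) (f g : I -> R) : finite_set P ->
  (forall i, P i -> f i <= g i) -> \sum_(i \in P) f i <= \sum_(i \in P) g i.
Proof.
move=> Pf fg; rewrite !fsbig_finite //; rewrite big_seq_cond [X in _ <= X]big_seq_cond.
apply: ler_sum => i /andP[+ _]; rewrite in_fset_set // inE; exact: fg.
Qed.

Lemma Num_split W (A K : set (U -> bool)) :
  Num ends c W A = Num ends c W (A `&` K) + Num ends c W (A `&` ~` K).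
Proof.
rewrite /Num -fsbigU0; first (apply: eq_fsbigl; apply/seteqP; split).
- move=> t [stt At]; have [Kt|nKt] := pselect (K (conf t)).
    by left. by right.
- by move=> t [[stt [At _]]|[stt [At _]]].
- exact: (finite_trees locfin).
- exact: (finite_trees locfin).
- by move=> t [[_ [_ Kt]] [_ [_ nKt]]].
Qed.

Lemma finite_ineq (W : {fset V}) v (A : set (U -> bool)) :
  v \in W -> (forall e, tail e = v -> head e \in W) ->
  \sum_(e \in [set e | tail e = v]) c e.1 * Num ends c W A <=
  \sum_(e \in [set e | tail e = v]) c e.1 * (Num ends c W (A `&` Kset ends e) +
     \sum_(d \in [set e | tail e = v]) NumD ends c W e d (Aset ends A e d)).
Proof.
move=> vW hW.
have Of := finite_Ov locfin v.
under eq_fsbigr => e _ do rewrite (Num_split W A (Kset ends e)) mulrDr.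
under [X in _ <= X]eq_fsbigr do rewrite mulrDr.
rewrite !fsbig_split //; rewrite lerD2l.
under [X in _ <= X]eq_fsbigr do rewrite mulr_fsumr.
rewrite exchange_fsbig //.
apply: fsum_le => // d /= td.
exact: key.
Qed.

End Count2.
Section Cyl.
Variables (V : choiceType) (U : countType) (ends : U -> V * V).
Local Notation oedge := (Defs.oedge U).

Definition cyl (S : {fset U}) (s : U -> bool) : set (U -> bool) :=
  [set w | forall u, u \in S -> w u = s u].

Lemma cylinders_cyl (S : {fset U}) s : cylinders (cyl S s).
Proof. by exists S, s. Qed.

Definition cyl0 (B : set (U -> bool)) := cylinders B \/ B = set0.

Lemma cyl_setI S1 s1 S2 s2 : cyl0 (cyl S1 s1 `&` cyl S2 s2).
Proof.
have [cons|ncons] := pselect (forall u, u \in S1 -> u \in S2 -> s1 u = s2 u).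
  left; exists (S1 `|` S2)%fset, (fun u => if u \in S1 then s1 u else s2 u).
  apply/seteqP; split.
    move=> w [h1 h2] u; rewrite inE => /orP[u1|u2]; first by rewrite u1 h1.
    by case: ifP => u1; [rewrite h1|rewrite h2].
  move=> w h; split => u uS.
    by have := h u; rewrite inE uS /= => ->.
  have := h u; rewrite inE uS orbT => /(_ isT).
  by case: ifP => // u1 ->; rewrite cons.
right; apply/seteqP; split => // w [h1 h2]; apply: ncons => u u1 u2.
by rewrite -h1 // h2.
Qed.

Lemma cyl0I B1 B2 : cyl0 B1 -> cyl0 B2 -> cyl0 (B1 `&` B2).
Proof.
case=> [[S1 [s1 ->]]|->]; last by right; rewrite set0I.
case=> [[S2 [s2 ->]]|->]; last by right; rewrite setI0.
exact: cyl_setI.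
Qed.

Lemma cyl0_cyl S s : cyl0 (cyl S s).
Proof. by left; exists S, s. Qed.

Lemma cyl0K B e : cyl0 B -> cyl0 (B `&` Kset ends e).
Proof.
move=> cB; have [se|nse] := boolP (selfloop ends e).
  suff -> : B `&` Kset ends e = B by [].
  by apply/seteqP; split => [w []//|w Bw]; split => //; rewrite /Kset /= se.
have -> : Kset ends e = cyl [fset e.1]%fset (fun=> true).
  apply/seteqP; split => w; rewrite /Kset /= (negbTE nse) /=.
    by move=> we u; rewrite inE => /eqP ->.
  by move=> /(_ e.1); rewrite inE eqxx => /(_ isT).
by apply: cyl0I => //; apply: cyl0_cyl.
Qed.

Lemma cyl0A B e d : cyl0 B -> cyl0 (Aset ends B e d).
Proof.
case=> [[S [s ->]]|->]; last first.
  by right; apply/seteqP; split => // w [_ []].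
have [se|nse] := boolP (selfloop ends e).
  by right; apply/seteqP; split => // w []; rewrite se.
have [cons|ncons] := pselect ((d.1 \in S -> s d.1 = false) /\
                              (e.1 \in S -> e.1 != d.1 -> s e.1 = true)).
  left; exists (e.1 |` ((S `\ d.1) `\ e.1))%fset,
    (fun u => if u == e.1 then false else s u).
  apply/seteqP; split.
    move=> w [_ [we h]] u; rewrite !inE.
    have [->|ue] := eqVneq u e.1; first by rewrite (negbTE we).
    move=> /= /andP[ud uS]; have := h u uS; rewrite /upd (negbTE ud) (negbTE ue).
    by [].
  move=> w h; split => //; split.
    by have := h e.1; rewrite !inE eqxx => /(_ isT) ->.
  move=> u uS; rewrite /upd.
  have [ud|ud] := eqVneq u d.1; first by subst u; rewrite (cons.1 uS).
  have [ue|ue] := eqVneq u e.1.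
    by subst u; rewrite (cons.2 uS ud).
  by have := h u; rewrite !inE (negbTE ue) (negbTE ud) uS /= => /(_ isT) ->.
right; apply/seteqP; split => // w [_ [_ h]]; apply: ncons; split.
  by move=> dS; rewrite -(h _ dS) /upd eqxx.
move=> eS ed; rewrite -(h _ eS) /upd (negbTE ed) eqxx.
by [].
Qed.

Lemma cylinders_nonempty (B : set (U -> bool)) : cylinders B -> exists w, B w.
Proof. by case=> S [s ->]; exists s. Qed.

End Cyl.
Section Count3.
Variables (R : realType) (V : choiceType) (U : countType) (ends : U -> V * V)
  (c : U -> R).
Hypothesis cpos : forall u, 0 < c u.
Hypothesis locfin : forall x, finite_set [set u | (ends u).1 = x \/ (ends u).2 = x].
Local Notation oedge := (Defs.oedge U).
Local Notation tail := (Defs.tail ends).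
Local Notation head := (Defs.head ends).

Lemma ust_ineq (W : {fset V}) v (A : set (U -> bool)) :
  v \in W -> (forall e, tail e = v -> head e \in W) -> 0 < out_cond ends c v ->
  ust ends c W A <= \sum_(e \in [set e | tail e = v])
    ((c e.1 / out_cond ends c v) * ust ends c W (A `&` Kset ends e) +
     \sum_(d \in [set e | tail e = v])
        (c e.1 / out_cond ends c v) * ust_dir ends c W e d (Aset ends A e d)).
Proof.
move=> vW hW C0.
set C := out_cond ends c v.
set Z := \sum_(t \in [set t | spanning_tree ends W t]) tree_weight c t.
have ustE B : ust ends c W B = Num ends c W B / Z by [].
have dirE e d B : ust_dir ends c W e d B = NumD ends c W e d B / Z by [].
rewrite (eq_fsbigr (fun e => (c e.1 * (Num ends c W (A `&` Kset ends e) +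
   \sum_(d \in [set e | tail e = v]) NumD ends c W e d (Aset ends A e d))) *
   (C^-1 * Z^-1))); last first.
  move=> e _; rewrite ustE; under eq_fsbigr do rewrite dirE.
  rewrite -mulr_fsumr -mulr_fsuml; ring.
rewrite -mulr_fsuml ustE.
rewrite [X in X <= _](_ : _ = (C * Num ends c W A) * (C^-1 * Z^-1)); last first.
  rewrite [RHS](_ : _ = (C / C) * (Num ends c W A / Z)); last by ring.
  by rewrite divff ?mul1r // gt_eqF.
apply: ler_wpM2r.
  by apply: mulr_ge0; rewrite invr_ge0; [apply: ltW | apply: fsumr_ge0 => t _; apply: wt_ge0].
rewrite /C /out_cond mulr_fsuml.
exact: finite_ineq.
Qed.

End Count3.
Section CvgSum.
Variable R : realType.
Lemma cvg_bigseq (I : eqType) (r : seq I) (f : I -> nat -> R) (a : I -> R) :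
  (forall i, i \in r -> f i n @[n --> \oo] --> a i) ->
  (\sum_(i <- r) f i n) @[n --> \oo] --> \sum_(i <- r) a i.
Proof.
elim: r => [|i r IH] h.
  have -> : (fun n => \sum_(j <- [::]) f j n) = (fun=> 0).
    by apply/funext => n; rewrite big_nil.
  by rewrite big_nil; apply: cvg_cst.
have -> : (fun n => \sum_(j <- i :: r) f j n) = (fun n => f i n + \sum_(j <- r) f j n).
  by apply/funext => n; rewrite big_cons.
rewrite big_cons; apply: cvgD; first by apply: h; rewrite mem_head.
by apply: IH => j jr; apply: h; rewrite inE jr orbT.
Qed.

Lemma cvg_fsum (I : choiceType) (P : set I) (f : I -> nat -> R) (a : I -> R) :
  finite_set P -> (forall i, P i -> f i n @[n --> \oo] --> a i) ->
  (\sum_(i \in P) f i n) @[n --> \oo] --> \sum_(i \in P) a i.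
Proof.
move=> Pf h; rewrite fsbig_finite //.
have -> : (fun n => \sum_(i \in P) f i n) = (fun n => \sum_(i <- fset_set P) f i n).
  by apply/funext => n; rewrite fsbig_finite.
by apply: cvg_bigseq => i; rewrite in_fset_set // inE; apply: h.
Qed.
End CvgSum.

Section Main.
Variables (R : realType) (V : choiceType) (U : countType)
  (ends : U -> V * V) (c : U -> R) (W : nat -> {fset V})
  (dT : measure_display) (T : measurableType dT) (P : probability T R)
  (F : T -> Omega U) (v : V) (E D : T -> oedge U).
Hypotheses (hnet : network ends c) (hex : exhaustion ends W)
  (mF : measurable_fun setT F)
  (mE : forall e, measurable (E @^-1` [set e]))
  (mD : forall d, measurable (D @^-1` [set d]))
  (hF : forall A, cylinders A ->
     (fun n => ust ends c (W n) A) @ \oo --> fine (P (F @^-1` A)))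
  (hEv : forall w, tail ends (E w) = v)
  (hEp : forall e, tail ends e = v ->
     P (E @^-1` [set e]) = (c e.1 / out_cond ends c v)%:E)
  (hind : forall e (A : set (Omega U)), measurable A ->
     P (E @^-1` [set e] `&` F @^-1` A) =
     (P (E @^-1` [set e]) * P (F @^-1` A))%E)
  (hDir : forall e d A, ~~ selfloop ends e -> cylinders A ->
     (forall w, A w -> ~~ w e.1) ->
     (fun n => fine (P (E @^-1` [set e])) * ust_dir ends c (W n) e d A)
       @ \oo -->
     fine (P (E @^-1` [set e] `&` F @^-1` A `&` D @^-1` [set d]))).

Local Notation oedge := (Defs.oedge U).
Local Notation tail := (Defs.tail ends).
Local Notation head := (Defs.head ends).

Definition Upd w : Omega U := if selfloop ends (E w) || F w (E w).1 then F w
                 else upd (F w) (E w) (D w).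

Definition KO e : set (Omega U) := Kset ends e.
Definition AO (B : set (Omega U)) e d : set (Omega U) := Aset ends B e d.

Lemma cpos u : 0 < c u. Proof. by case: hnet. Qed.
Lemma locfin x : finite_set [set u | (ends u).1 = x \/ (ends u).2 = x].
Proof. by case: hnet. Qed.

Lemma mcyl0 (B : set (Omega U)) : cyl0 B -> measurable B.
Proof. by case=> [cB|->//]; apply: sub_sigma_algebra. Qed.

Lemma mFpre (B : set (Omega U)) : measurable B -> measurable (F @^-1` B).
Proof. by move=> mB; rewrite -[F @^-1` B]setTI; apply: mF. Qed.

Lemma Upd_pre (B : set (Omega U)) : Upd @^-1` B =
  \bigcup_e (E @^-1` [set e] `&` (F @^-1` (B `&` KO e) `|`
     \bigcup_d (F @^-1` (AO B e d) `&` D @^-1` [set d]))).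
Proof.
apply/seteqP; split => w.
  rewrite /Upd /preimage /=; case: ifPn => K Bw; exists (E w) => //; split => //.
    by left; split.
  right; exists (D w) => //; split => //; move: K; rewrite negb_or => /andP[? ?].
  by split.
move=> [e _ [/= Ee [[BF KF]|[d _ [[ns [nF BU]] /= De]]]]]; rewrite /Upd /= Ee.
  by rewrite ifT.
by rewrite ifF ?De // (negbTE ns) (negbTE nF).
Qed.

Lemma mUpd : measurable_fun setT Upd.
Proof.
apply: (@measurability _ _ T (Omega U) setT Upd (@cylinders U)) => //.
move=> _ [B cB <-]. rewrite setTI Upd_pre.
apply: countable_bigcupT_measurable; first exact: countableP.
move=> e; apply: measurableI => //; apply: measurableU.
  exact: (mFpre (mcyl0 (@cyl0K _ _ ends B e (or_introl cB)))).
apply: countable_bigcupT_measurable; first exact: countableP.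
move=> d; apply: measurableI => //.
exact: (mFpre (mcyl0 (@cyl0A _ _ ends B e d (or_introl cB)))).
Qed.

Definition Ov := [set e : oedge | tail e = v].
Lemma Ovf : finite_set Ov. Proof. exact: finite_Ov locfin v. Qed.
Definition pe e := fine (P (E @^-1` [set e])).

Lemma ust_set0 W0 : ust ends c W0 set0 = 0.
Proof. by rewrite /ust fsbig1 ?mul0r // => t [_ []]. Qed.
Lemma ust_dir_set0 W0 e d : ust_dir ends c W0 e d set0 = 0.
Proof. by rewrite /ust_dir fsbig1 ?mul0r // => t [_ []]. Qed.

Lemma Pfin (X : set T) : measurable X -> P X = (fine (P X))%:E.
Proof. by move=> mX; rewrite fineK // fin_num_measure. Qed.

Lemma lim_ust (B : set (Omega U)) : cyl0 B ->
  (fun n => ust ends c (W n) B) @ \oo --> fine (P (F @^-1` B)).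
Proof.
case=> [cB|->]; first exact: hF.
rewrite preimage_set0 measure0 /=.
have -> : (fun n => ust ends c (W n) set0) = (fun=> 0).
  by apply/funext => n; rewrite ust_set0.
exact: cvg_cst.
Qed.

Lemma lim_dir (A : set (Omega U)) e d : cyl0 (AO A e d) ->
  (fun n => pe e * ust_dir ends c (W n) e d (AO A e d)) @ \oo -->
  fine (P (E @^-1` [set e] `&` F @^-1` (AO A e d) `&` D @^-1` [set d])).
Proof.
case=> [cX|X0].
  have [w Xw] := cylinders_nonempty cX.
  apply: hDir => //; first by case: Xw.
  by move=> w' [_ []].
rewrite X0 preimage_set0 setI0 set0I measure0 /=.
have -> : (fun n => pe e * ust_dir ends c (W n) e d set0) = (fun=> 0).
  by apply/funext => n; rewrite ust_dir_set0 mulr0.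
exact: cvg_cst.
Qed.

Lemma Wmono m n : (m <= n)%N -> (W m `<=` W n)%fset.
Proof.
case: hex => hmono _ _.
elim: n => [|n IH]; first by rewrite leqn0 => /eqP ->.
rewrite leq_eqVlt => /orP[/eqP -> //|]; rewrite ltnS => /IH h.
exact: fsubset_trans h (hmono n).
Qed.

Lemma eventually_in (s : seq V) : exists N, forall n, (N <= n)%N ->
  all (fun x => x \in W n) s.
Proof.
case: hex => _ hall _.
elim: s => [|x s [N IH]]; first by exists 0%N.
have [m xm] := hall x.
exists (maxn m N) => n; rewrite geq_max => /andP[mn Nn] /=.
rewrite IH // andbT; exact: (fsubsetP (Wmono mn)).
Qed.

Lemma C0 : 0 < out_cond ends c v.
Proof.
have [w0 _] : exists w0 : T, True.
  apply: contrapT => nex.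
  have h : [set: T] = set0 by apply/seteqP; split => // w _; apply: nex; exists w.
  have := probability_setT P; rewrite h measure0.
  by move/esym/eqP; rewrite eqe oner_eq0.
rewrite /out_cond (fsbigD1 (E w0)) //=; last exact: Ovf.
apply: lt_le_trans (cpos (E w0).1) _; rewrite lerDl.
by apply: fsumr_ge0 => e _; apply/ltW/cpos.
Qed.

Section LB.
Variable A : set (Omega U).
Hypothesis cA : cylinders A.

Let k e := E @^-1` [set e] `&` F @^-1` (A `&` KO e).
Let piece e d := E @^-1` [set e] `&` F @^-1` (AO A e d) `&` D @^-1` [set d].
Let Lsum := \sum_(e \in Ov) (pe e * fine (P (F @^-1` (A `&` KO e))) +
   \sum_(d \in Ov) fine (P (piece e d))).

Let cAK e : cyl0 (A `&` KO e). Proof. exact: cyl0K (or_introl cA). Qed.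
Let cAA e d : cyl0 (AO A e d). Proof. exact: cyl0A (or_introl cA). Qed.
Let mk e : measurable (k e).
Proof. by apply: measurableI => //; exact: (mFpre (mcyl0 (cAK e))). Qed.
Let mp e d : measurable (piece e d).
Proof. by apply: measurableI => //; apply: measurableI => //; exact: (mFpre (mcyl0 (cAA e d))). Qed.

Lemma LB1 : (Lsum%:E <= P (Upd @^-1` A))%E.
Proof.
set S := \bigcup_(e in Ov) (k e `|` \bigcup_(d in Ov) piece e d).
have mB e : measurable (\bigcup_(d in Ov) piece e d).
  by apply: fin_bigcup_measurable; [exact: Ovf | move=> d _; exact: mp].
have mS : measurable S.
  by apply: fin_bigcup_measurable; [exact: Ovf | move=> e _; exact: measurableU].
have mU : measurable (Upd @^-1` A).
  by rewrite -[_ @^-1` _]setTI; apply: mUpd => //; apply: sub_sigma_algebra.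
have SU : S `<=` Upd @^-1` A.
  move=> w [e _ [[/= Ew [Aw Kw]]|[d _ [[/= Ew [ns [nF AU]]] /= Dw]]]];
    rewrite /preimage /= /Upd Ew.
    by move: Kw; rewrite /KO /Kset /= => ->.
  by rewrite (negbTE ns) (negbTE nF) /= Dw.
apply: le_trans (le_measure _ (mem_set mS) (mem_set mU) SU).
rewrite measure_fin_bigcup //; last 3 first.
- exact: Ovf.
- move=> e e' _ _ [w [h1 h2]].
  have ew : forall e0, (k e0 `|` \bigcup_(d in Ov) piece e0 d) w -> E w = e0.
    by move=> e0 [[]|[d _ [[]]]].
  by rewrite -(ew e h1) -(ew e' h2).
- by move=> e _; apply: measurableU.
rewrite /Lsum -fsumEFin; last exact: Ovf.
rewrite le_eqVlt; apply/orP; left; apply/eqP.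
apply: eq_fsbigr => e _.
rewrite measureU //; last first.
  apply/seteqP; split => // w [[_ [_ Kw]] [d _ [[_ [ns [nF _]]] _]]].
  by move: Kw; rewrite /KO /Kset /= (negbTE ns) (negbTE nF).
rewrite EFinD; congr (_ + _)%E.
  have h := hind e (mcyl0 (cAK e)).
  rewrite /k; etransitivity; last exact: (esym h).
  by rewrite EFinM /pe -!Pfin //; exact: (mFpre (mcyl0 (cAK e))).
rewrite measure_fin_bigcup //; last 2 first.
- exact: Ovf.
- move=> d d' _ _ [w [[_ /= h1] [_ /= h2]]].
  by rewrite -h1 -h2.
rewrite -fsumEFin; last exact: Ovf.
by apply: eq_fsbigr => d _; rewrite -Pfin.
Qed.

Lemma LB2 : fine (P (F @^-1` A)) <= Lsum.
Proof.
have [N HN] := eventually_in (v :: [seq head e | e <- fset_set Ov]).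
apply: (ler_cvg_to (hF cA)).
  apply: cvg_fsum; first exact: Ovf.
  move=> e _; apply: cvgD.
    by apply: cvgM; [exact: cvg_cst | exact: lim_ust (cAK e)].
  apply: cvg_fsum; first exact: Ovf.
  by move=> d _; exact: lim_dir (cAA e d).
exists N => // n /= Nn.
have /andP[vW hW] := HN n Nn.
have hW' : forall e, tail e = v -> head e \in W n.
  move=> e te; move/allP: hW; apply; apply: map_f.
  by rewrite in_fset_set ?inE //; exact: Ovf.
apply: le_trans (ust_ineq cpos locfin A vW hW' C0) _.
rewrite le_eqVlt; apply/orP; left; apply/eqP.
apply: eq_fsbigr => e; rewrite inE => te.
by rewrite /pe hEp.
Qed.

Lemma LB : fine (P (F @^-1` A)) <= fine (P (Upd @^-1` A)).
Proof.
apply: le_trans LB2 _.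
have mU : measurable (Upd @^-1` A).
  by rewrite -[_ @^-1` _]setTI; apply: mUpd => //; apply: sub_sigma_algebra.
by rewrite -lee_fin -Pfin //; exact: LB1.
Qed.

End LB.
Lemma mpreU (B : set (Omega U)) : measurable B -> measurable (Upd @^-1` B).
Proof. by move=> mB; rewrite -[_ @^-1` _]setTI; apply: mUpd. Qed.

Definition cylO S s : set (Omega U) := cyl S s.

Lemma mcylO S s : measurable (cylO S s).
Proof. by apply: sub_sigma_algebra; exists S, s. Qed.

Lemma cyl_split (S : {fset U}) s u : u \in S ->
  cylO (S `\ u)%fset s = cylO S s `|` cylO S (fun x => if x == u then ~~ s u else s x)
  /\ cylO S s `&` cylO S (fun x => if x == u then ~~ s u else s x) = set0.
Proof.
move=> uS; split; apply/seteqP; split.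
- move=> w h; have [wu|wu] := boolP (w u == s u).
    left => x xS; have [->|xu] := eqVneq x u; first exact/eqP.
    by apply: h; rewrite !inE xu.
  right => x xS; have [->|xu] := eqVneq x u.
    by rewrite ?eqxx; move: wu; case: (w u); case: (s u).
  by rewrite ?(negbTE xu); apply: h; rewrite !inE xu.
- move=> w [h|h] x; rewrite !inE => /andP[xu xS]; have := h x xS => //.
  by rewrite ?(negbTE xu).
- move=> w [h1 h2]; have := h1 u uS; have := h2 u uS; rewrite ?eqxx => ->.
  by case: (s u).
- by [].
Qed.

Lemma eq_cyl n : forall (S : {fset U}) s, #|` S| = n ->
  fine (P (Upd @^-1` cylO S s)) = fine (P (F @^-1` cylO S s)).
Proof.
elim: n => [|n IH] S s hS.
  have -> : cylO S s = setT.
    by rewrite (cardfs0_eq hS); apply/seteqP; split => // w _ u; rewrite inE.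
  by rewrite !preimage_setT.
have /fset0Pn [u uS] : S != fset0 by rewrite -cardfs_gt0 hS.
have hS' : #|` (S `\ u)%fset| = n by move: hS; rewrite (cardfsD1 u) uS add1n => -[].
set s' := fun x => if x == u then ~~ s u else s x.
have [spl dis] := cyl_split s uS.
have addX (X : T -> Omega U) : measurable_fun setT X ->
    fine (P (X @^-1` cylO (S `\ u)%fset s)) =
    fine (P (X @^-1` cylO S s)) + fine (P (X @^-1` cylO S s')).
  move=> mX.
  have mXp B : measurable B -> measurable (X @^-1` B).
    by move=> mB; rewrite -[_ @^-1` _]setTI; apply: mX.
  rewrite spl preimage_setU measureU ?fineD ?fin_num_measure //;
    try by apply: mXp; apply: mcylO.
  by rewrite -preimage_setI dis preimage_set0.
have h1 := IH _ s hS'.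
have l1 := LB (cylinders_cyl S s).
have l2 := LB (cylinders_cyl S s').
rewrite (addX _ mUpd) (addX _ mF) in h1.
rewrite /cylO in h1 *.
lra.
Qed.

Lemma main_cyl (B : set (Omega U)) : cylinders B ->
  P (Upd @^-1` B) = P (F @^-1` B).
Proof.
case=> S [s ->].
rewrite (Pfin (mpreU (mcylO S s))) (Pfin (mFpre (mcylO S s))).
by congr (_%:E); exact: (@eq_cyl _ S s erefl).
Qed.

Lemma main_meas (A : set (Omega U)) : measurable A ->
  P (Upd @^-1` A) = P (F @^-1` A).
Proof.
move=> mA.
pose G : set (set (Omega U)) := @cyl0 U.
have mG : @measurable _ (Omega U) = <<s G >>.
  apply/seteqP; split.
    by apply: sub_sigma_algebra2 => B cB; left.
  apply: smallest_sub; first exact: sigma_algebra_measurable.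
  by move=> B; apply: mcyl0.
have := @measure_unique _ _ (Omega U) G (fun=> setT) mG _ _ _
  (pushforward P Upd) (pushforward P F).
apply => //.
- by rewrite /setI_closed => B1 B2; apply: cyl0I.
- by move=> ?; left; exists fset0, (fun=> true); apply/seteqP; split => // w _ u; rewrite inE.
- by apply/seteqP; split => // w _; exists 0%N.
- exact: mUpd.
- move=> ? B [cB|->]; first exact: main_cyl.
  by rewrite !measure0.
- move=> ? ?; change (P (Upd @^-1` setT) < +oo)%E.
  by rewrite preimage_setT probability_setT ltry.
Qed.

End Main.
Unset Implicit Arguments.
Theorem lemma2p3 (R : realType) (V : choiceType) (U : countType)
  (ends : U -> V * V) (c : U -> R) (W : nat -> {fset V})
  (dT : measure_display) (T : measurableType dT) (P : probability T R)
  (F : T -> Omega U) (v : V) (E D : T -> oedge U) :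
  network ends c ->
  exhaustion ends W ->
  measurable_fun setT F ->
  (forall e, measurable (E @^-1` [set e])) ->
  (forall d, measurable (D @^-1` [set d])) ->
  (* F is a sample of FUSF_G: UST_{G_n} converges weakly to its law *)
  (forall A, cylinders A ->
     (fun n => ust ends c (W n) A) @ \oo --> fine (P (F @^-1` A))) ->
  (* E emanates from v, with probability proportional to conductance *)
  (forall w, tail ends (E w) = v) ->
  (forall e, tail ends e = v ->
     P (E @^-1` [set e]) = (c e.1 / out_cond ends c v)%:E) ->
  (* E is independent of F *)
  (forall e (A : set (Omega U)), measurable A ->
     P (E @^-1` [set e] `&` F @^-1` A) =
     (P (E @^-1` [set e]) * P (F @^-1` A))%E) ->
  (* on {E = e, e not a self-loop, e not in F}, D is sampled from the
     conditional law of D(e) given F, i.e. (F, D) has there the limit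
     joint law of (T_n, D(T_n, e)) *)
  (forall e d A, ~~ selfloop ends e -> cylinders A ->
     (forall w, A w -> ~~ w e.1) ->
     (fun n => fine (P (E @^-1` [set e])) * ust_dir ends c (W n) e d A)
       @ \oo -->
     fine (P (E @^-1` [set e] `&` F @^-1` A `&` D @^-1` [set d]))) ->
  forall A : set (Omega U), measurable A ->
    P ((fun w => if selfloop ends (E w) || F w (E w).1 then F w
                 else upd (F w) (E w) (D w)) @^-1` A)
    = P (F @^-1` A).
Proof.
move=> hnet hex mF mE mD hF hEv hEp hind hDir A mA.
exact: (main_meas hnet hex mF mE mD hF hEv hEp hind hDir mA).
Qed.
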